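(* Let $S(T)\in\mathbb C[T]$ be a polynomial with constant term $1$, and let $P(T)=1+a_1T+a_2T^2+\cdots$ be its multiplicative inverse in the formal power series ring $\mathbb C[[T]]$. If there exists an integer $r>0$ such that $a_{mr}=0$ for all integers $m\ge1$, then $S(T)=1$. *)

(* Defs.v *)
From HB Require Import structures.
From mathcomp Require Import all_boot all_order all_algebra.
Set Implicit Arguments. Unset Strict Implicit. Unset Printing Implicit Defensive.
Import Order.TTheory GRing.Theory Num.Theory.
Local Open Scope ring_scope.

Definition is_fps_inverse (R : nzRingType) (S : {poly R}) (a : nat -> R) : Prop :=
  forall n : nat, \sum_(i < n.+1) S`_i * a (n - i)%N = (n == 0%N)%:R.

(* Main.v *)
Require Import Defs.
From HB Require Import structures.
From mathcomp Require Import all_boot all_order all_algebra.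
Import Order.TTheory GRing.Theory Num.Theory.
Local Open Scope ring_scope.

Theorem theorem4p13 (C : numClosedFieldType) (S : {poly C}) (a : nat -> C) :
  S`_0 = 1 ->
  is_fps_inverse S a ->
  (exists r : nat, (0 < r)%N /\ (forall m : nat, (1 <= m)%N -> a (m * r)%N = 0)) ->
  S = 1.
Proof.
move=> S0 Hinv [r [r0 Har]].
have a0 : a 0%N = 1.
  by have := Hinv 0%N; rewrite big_ord1 /= S0 mul1r.
have S0' : S != 0 by apply/eqP => S0E; move: S0; rewrite S0E coef0 => /eqP; rewrite eq_sym oner_eq0.
have [sS|sS] := leqP (size S) 1%N.
  by rewrite (size1_polyC sS) S0.
exfalso.
have [rs Srs] := closed_field_poly_normal S.
pose q := \prod_(z <- rs) ('X - (z ^+ r)%:P).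
pose W := q \Po 'X^r.
have dW : \prod_(z <- rs) ('X - z%:P) %| W.
  rewrite /W /q; elim: (rs) => [|z s IH]; first by rewrite !big_nil dvd1p.
  rewrite !big_cons comp_polyM; apply: dvdp_mul => //.
  rewrite dvdp_XsubCl /root comp_polyB comp_polyX comp_polyC !hornerE subrr //.
have lc : lead_coef S != 0 by rewrite lead_coef_eq0.
have dSW : S %| W by rewrite Srs dvdpZl.
pose U := W %/ S.
have WU : U * S = W by rewrite /U divpK.
pose N := (size rs * r)%N.
have WN : W`_N = 1.
  rewrite /W coef_comp_poly_Xn // /N dvdn_mull // mulnK //.
  have := lead_coef_prod_XsubC rs xpredT (fun z => z ^+ r).
  by rewrite lead_coefE size_prod_XsubC.
have sW : (size W <= N.+1)%N.
  apply: leq_trans (size_comp_poly_leq _ _) _.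
  by rewrite size_polyXn size_prod_XsubC.
have UN : U`_N = 0.
  apply: nth_default.
  have U0 : U != 0.
    by apply/eqP => U0; move: WN; rewrite -WU U0 mul0r coef0 => /eqP; rewrite eq_sym oner_eq0.
  move: sW; rewrite -WU size_mul //.
  move: sS; case: (size S) => // [] [] // k _.
  by rewrite addnS /= addnS ltnS => /(leq_trans (leq_addr _ _)).
pose A := \poly_(i < N.+1) a i.
have SA : forall k, (k <= N)%N -> (S * A)`_k = (k == 0%N)%:R.
  move=> k Hk; rewrite coefM -Hinv; apply: eq_bigr => i _.
  by rewrite coef_poly ltnS (leq_trans (leq_subr _ _) Hk).
have E1 : (W * A)`_N = U`_N.
  rewrite -WU -mulrA coefM big_ord_recr /= subnn SA // eqxx mulr1 big1 ?add0r //.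
  move=> j _; rewrite SA ?leq_subr // subn_eq0 leqNgt ltn_ord /= mulr0 //.
have E2 : (W * A)`_N = 1.
  rewrite coefM big_ord_recr /= subnn coef_poly ltnS leq0n a0 WN mulr1 big1 ?add0r //.
  move=> j _; rewrite coef_poly ltnS leq_subr /W coef_comp_poly_Xn //.
  case: dvdnP => [[k Hk]|]; last by rewrite mul0r.
  have jN := ltn_ord j; rewrite Hk /N ltn_mul2r r0 /= in jN.
  by rewrite Hk /N -mulnBl Har ?mulr0 // subn_gt0.
by move: E2; rewrite E1 UN => /eqP; rewrite eq_sym oner_eq0.
Qed.
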